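(* For a nonempty finite set $S=\{i_1<i_2<\cdots<i_k\}$ of positive integers define the polynomial $$r_S(x_1,x_2,\ldots) = (x_{i_2} + \cdots + x_{i_k} - 1)(x_{i_3} + \cdots + x_{i_k} - 1) \cdots (x_{i_{k-1}}+x_{i_k} - 1) (x_{i_k} - 1)$$ (so $r_S=1$ when $|S|=1$). Let $n\ge 2$, let $\mathbf x$ denote the variables $x_1,x_2,\ldots$ and $\mathbf x/2$ denote $x_1/2,x_2/2,\ldots$. Then $$r_{[n]}(\mathbf x) = 2^{n-1} r_{[n]}(\mathbf x/2) + \sum_{1 \in S \subsetneq [n]} r_S(\mathbf x) \cdot r_{[n] \setminus S}(\mathbf x),$$ where $[n]=\{1,\dots,n\}$ and the sum is over all proper subsets $S$ of $[n]$ containing $1$. *)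

(* Defs.v *)
From mathcomp Require Import all_boot all_order all_algebra.
Set Implicit Arguments. Unset Strict Implicit. Unset Printing Implicit Defensive.
Import Order.TTheory GRing.Theory Num.Theory.
Local Open Scope ring_scope.

Fixpoint rseq (R : nzRingType) (s : seq nat) (x : nat -> R) : R :=
  match s with
  | [::] => 1
  | _ :: t => match t with
              | [::] => 1
              | _ :: _ => (\sum_(j <- t) x j - 1) * rseq t x
              end
  end.

(* A subset S of [n] = {1,...,n} is encoded as S : {set 'I_n}, ordinal i
   standing for the positive integer i+1.  r_S(x) evaluated at x : nat -> R
   (x j is the value of the variable x_j, j >= 1). *)
Definition rset (R : nzRingType) (n : nat) (S : {set 'I_n}) (x : nat -> R) : R :=
  rseq (sort leq [seq (val i).+1 | i <- enum S]) x.

(* Main.v *)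
Require Import Defs.
From mathcomp Require Import all_boot all_order all_algebra.
From mathcomp Require Import ring.
Import Order.TTheory GRing.Theory Num.Theory.
Local Open Scope ring_scope.

Section S.
Set Implicit Arguments. Unset Strict Implicit.
Variable R : numFieldType.
Variable n : nat.
Implicit Types (S T B : {set 'I_n}) (x : nat -> R).

Definition sl S := sort leq [seq (val i).+1 | i <- enum S].
Definition P x S := rseq (0%N :: sl S) x.
Definition sig x S := \sum_(i in S) x (val i).+1.

Lemma sl_min S t : t \in S -> (forall j, j \in S -> (val t <= val j)%N) ->
  sl S = (val t).+1 :: sl (S :\ t).
Proof.
move=> tS tmin; apply: (sorted_eq leq_trans anti_leq).
- exact: sort_sorted leq_total _.
- rewrite /= path_sortedE; last exact: leq_trans.
  rewrite sort_sorted ?andbT; last exact: leq_total.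
  apply/allP=> k; rewrite mem_sort => /mapP [j]; rewrite mem_enum !inE => /andP [_ jS] ->.
  by rewrite ltnS tmin.
- rewrite /sl perm_sort.
  set L' := [seq _ | _ <- enum (S :\ t)].
  have h : perm_eq ((val t).+1 :: L') ((val t).+1 :: sort leq L').
    by rewrite perm_cons perm_sym; apply/permEl/perm_sort.
  apply: perm_trans _ h.
  rewrite -[_ :: _]/(map (fun i : 'I_n => (val i).+1) (t :: enum (S :\ t))).
  apply: perm_map; apply: uniq_perm.
  + exact: enum_uniq.
  + by rewrite /= mem_enum !inE eqxx enum_uniq.
  + move=> j; rewrite in_cons !mem_enum !inE.
    by case: eqP => [->|]; rewrite ?tS.
Qed.

Lemma sum_sl x S : \sum_(j <- sl S) x j = sig x S.
Proof. by rewrite /sl (perm_big _ (permEl (perm_sort _ _))) big_map big_enum. Qed.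

Lemma rset_min x S t : t \in S -> (forall j, j \in S -> (val t <= val j)%N) ->
  rset S x = P x (S :\ t).
Proof. by move=> tS tm; rewrite /rset -/(sl S) (sl_min tS tm) /P. Qed.

Lemma P_min x S t : t \in S -> (forall j, j \in S -> (val t <= val j)%N) ->
  P x S = (sig x S - 1) * P x (S :\ t).
Proof.
move=> tS tm; rewrite {1}/P (sl_min tS tm) /= -(sl_min tS tm) sum_sl.
by rewrite /P.
Qed.

Lemma P0 x : P x set0 = 1.
Proof.
rewrite /P /sl.
have -> : enum (set0 : {set 'I_n}) = [::] by apply/eqP; rewrite -size_eq0 -cardE cards0.
by [].
Qed.

Lemma exists_min S : S != set0 -> exists2 t, t \in S & forall j, j \in S -> (val t <= val j)%N.
Proof.
case/set0Pn=> i iS.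
case: (arg_minnP (fun j : 'I_n => val j) iS) => t tS tm.
by exists t.
Qed.


Definition Q x S := 2%:R ^+ #|S| * P (fun j => x j / 2%:R) S.

Lemma sig_half x S : sig (fun j => x j / 2%:R) S = sig x S / 2%:R.
Proof. by rewrite /sig mulr_suml. Qed.

Lemma Q_min x S t : t \in S -> (forall j, j \in S -> (val t <= val j)%N) ->
  Q x S = (sig x S - 2%:R) * Q x (S :\ t).
Proof.
move=> tS tm; rewrite /Q (cardsD1 t S) tS (P_min _ tS tm) sig_half add1n exprS.
have h2 : (2%:R : R) != 0 by rewrite pnatr_eq0.
by field.
Qed.

Definition G x T := \sum_(B : {set 'I_n} | (B \subset T) && (B != set0))
   P x (T :\: B) * rset B x.

Lemma G_eq x k T : #|T| = k -> G x T = P x T - Q x T.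
Proof.
elim: k T => [|k IH] T hT.
  move/eqP: hT; rewrite cards_eq0 => /eqP ->.
  rewrite /G big_pred0; last first.
    by move=> B; rewrite subset0; case: (B == set0).
  by rewrite /Q cards0 expr0 mul1r !P0 subrr.
have Tn0 : T != set0 by rewrite -card_gt0 hT.
have [t tT tm] := exists_min Tn0.
set T' := T :\ t.
have hT' : #|T'| = k by move: hT; rewrite (cardsD1 t T) tT add1n => -[].
have E1 : \sum_(B : {set 'I_n} | ((B \subset T) && (B != set0)) && (t \in B))
     P x (T :\: B) * rset B x
   = \sum_(B : {set 'I_n} | B \subset T') P x (T' :\: B) * P x B.
  rewrite (reindex_onto (fun B => t |: B) (fun B => B :\ t)) /=; last first.
    by move=> B /andP [_ tB]; rewrite setD1K.
  apply: eq_big => B.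
    rewrite setU11 andbT subsetD1.
    case: (boolP (t \in B)) => tB.
      rewrite andbF; apply/negbTE; apply/negP => /andP [_ /eqP hB].
      by move: tB; rewrite -hB !inE eqxx.
    rewrite setU1K // eqxx andbT.
    have -> : (t |: B != set0) = true by apply/set0Pn; exists t; rewrite setU11.
    by rewrite andbT subUset sub1set tT andbT.
  move=> /andP [/andP [/andP [hsub _] _] /eqP hB].
  have tB : t \notin B by rewrite -hB !inE eqxx.
  have -> : T :\: (t |: B) = T' :\: B.
    apply/setP => i; rewrite !inE.
    by case: (i == t); case: (i \in B); case: (i \in T).
  rewrite (@rset_min x (t |: B) t) ?setU11 ?hB // => j.
  rewrite !inE => /orP [/eqP -> //|jB].
  by apply: tm; apply: (subsetP hsub); rewrite inE jB orbT.
have sigD : forall B, B \subset T -> sig x (T :\: B) = sig x T - sig x B.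
  move=> B hB; rewrite [sig x T](big_setID B) /=.
  by rewrite (setIidPr hB) addrC addrK.
have E2 : \sum_(B : {set 'I_n} | ((B \subset T) && (B != set0)) && ~~ (t \in B))
     P x (T :\: B) * rset B x
   = \sum_(B : {set 'I_n} | (B \subset T') && (B != set0))
       ((sig x T - 1) - sig x B) * (P x (T' :\: B) * rset B x).
  apply: eq_big => B.
    by rewrite subsetD1 andbAC.
  move=> /andP [/andP [hsub _] tB].
  rewrite (@P_min x (T :\: B) t); first last.
  - by move=> j; rewrite !inE => /andP [_ jT]; apply: tm.
  - by rewrite !inE tB tT.
  have -> : (T :\: B) :\ t = T' :\: B.
    apply/setP => i; rewrite !inE.
    by case: (i == t); case: (i \in B); case: (i \in T).
  by rewrite sigD // mulrA; congr (_ * _ * _); ring.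
have E3 : forall B, B != set0 -> sig x B * rset B x = P x B + rset B x.
  move=> B /exists_min [b bB bm].
  rewrite (@rset_min x B b) // (@P_min x B b) //; ring.
set Cn := \sum_(B : {set 'I_n} | (B \subset T') && (B != set0)) P x (T' :\: B) * P x B.
have Csplit : \sum_(B : {set 'I_n} | B \subset T') P x (T' :\: B) * P x B = P x T' + Cn.
  rewrite (bigD1 set0) ?sub0set //= setD0 P0 mulr1.
  by [].
have E4 : \sum_(B : {set 'I_n} | (B \subset T') && (B != set0))
       ((sig x T - 1) - sig x B) * (P x (T' :\: B) * rset B x)
   = (sig x T - 1) * G x T' - (Cn + G x T').
  rewrite /G /Cn mulr_sumr -big_split /= -sumrB.
  apply: eq_bigr => B /andP [_ Bn0].
  have := E3 B Bn0; set p := P x (T' :\: B); set r := rset B x => e.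
  transitivity ((sig x T - 1) * (p * r) - p * (sig x B * r)); first ring.
  rewrite e; ring.
rewrite /G (bigID (fun B => t \in B)) /= E1 E2 Csplit E4 (IH _ hT').
rewrite (@P_min x T t) // (@Q_min x T t) //; ring.
Qed.

End S.

Theorem lemma3p2 (R : numFieldType) (n : nat) (hn : (2 <= n)%N) (x : nat -> R) :
  rset [set: 'I_n] x =
    2%:R ^+ n.-1 * rset [set: 'I_n] (fun j => x j / 2%:R)
    + \sum_(S : {set 'I_n} | (S \proper [set: 'I_n]) && [exists i in S, val i == 0%N])
        rset S x * rset (~: S) x.
Proof.
case: n hn x => [|[|m]] // _ x.
set T := [set: 'I_m.+2] :\ ord0.
have t0m : forall j : 'I_m.+2, j \in [set: 'I_m.+2] -> (val (ord0 : 'I_m.+2) <= val j)%N by [].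
have cT : #|T| = m.+1.
  by move: (cardsD1 ord0 [set: 'I_m.+2]); rewrite cardsT card_ord inE add1n => -[].
rewrite (@rset_min _ _ x setT ord0) // (@rset_min _ _ (fun j => x j / 2%:R) setT ord0) //.
have -> : 2%:R ^+ (m.+2).-1 * P (fun j => x j / 2%:R) T = Q x T by rewrite /Q cT.
have -> : \sum_(S : {set 'I_m.+2} | (S \proper [set: 'I_m.+2]) && [exists i in S, val i == 0%N])
        rset S x * rset (~: S) x = G x T.
  rewrite (reindex_inj (@setC_inj _)) /=; apply: eq_big => B.
    rewrite properT -setC0 (inj_eq (@setC_inj _)) subsetD1 subsetT /= andbC.
    congr (_ && _); apply/existsP/idP.
      move=> [i /andP [iB /eqP i0]].
      have -> : (ord0 : 'I_m.+2) = i by apply: val_inj.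
      by rewrite inE in iB.
    by move=> h; exists ord0; rewrite inE h eqxx.
  move=> /andP [_ /existsP [i /andP [iB /eqP i0]]].
  have i0' : i = ord0 by apply: val_inj.
  rewrite i0' in iB.
  rewrite setCK (@rset_min _ _ x (~: B) ord0) //.
  have -> : (~: B) :\ ord0 = T :\: B by apply/setP => j; rewrite !inE ?andbT andbC.
  by [].
by rewrite (G_eq x cT); ring.
Qed.
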